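(* For $n\geq 3$, $$b(n)=2+n+\sum_{k=2}^{n}\binom{n}{k}\, b_{-}(k).$$ Furthermore, $b_{-}(2)=2$, and for all $k\geq 3$, $$b_{-}(k)=b_{-}^{-}(k)+2+\sum_{i=2}^{k-1}\binom{k}{i}\, b_{-}(i).$$
   Context: For $n\in\mathbb{N}$, the Boolean lattice $B(n)$ is the set of binary words of length $n$ ordered coordinatewise (i.e. $B(n)=\mathbf{2}^n$ with $\mathbf{2}$ the chain $0<1$). For $0\leq \ell\leq n$, the level $L_\ell(n)$ is the set of words with exactly $\ell$ ones. For $n\geq 2$, $B_{-}(n):=\bigcup_{i=2}^n L_i(n)$ and $B^{-}(n):=\bigcup_{i=0}^{n-2}L_i(n)$, and for $n\geq 3$, $B_{-}^{-}(n):=\bigcup_{i=2}^{n-2}L_i(n)$, each with the induced order. For a finite poset $P$, $d(P)$ is the number of down-sets of $P$ (subsets closed under going down, including the empty set). Set $b(n):=d(B(n))$ (the $n$-th Dedekind number), $b_{-}(n):=d(B_{-}(n))$, $b_{-}^{-}(n):=d(B_{-}^{-}(n))$. *)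

(* Defs.v *)
From mathcomp Require Import all_boot all_order.
Set Implicit Arguments. Unset Strict Implicit. Unset Printing Implicit Defensive.

(* The Boolean lattice B(n) = 2^n is modelled as {set 'I_n} ordered by
   inclusion (a binary word of length n <-> the set of positions carrying 1).
   The level L_l(n) is the set of subsets of cardinality l. *)

Definition is_downset (n : nat) (P : pred {set 'I_n}) (D : {set {set 'I_n}}) : bool :=
  [forall x, (x \in D) ==> P x] &&
  [forall x, forall y, [&& x \in D, P y & y \subset x] ==> (y \in D)].

Definition num_downsets (n : nat) (P : pred {set 'I_n}) : nat :=
  #|[set D : {set {set 'I_n}} | is_downset P D]|.

Definition b (n : nat) : nat := num_downsets (fun _ : {set 'I_n} => true).
(* B_-(n) = union of levels 2..n *)
Definition b_low (n : nat) : nat :=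
  num_downsets (fun x : {set 'I_n} => 2 <= #|x|).
(* B_-^-(n) = union of levels 2..n-2 *)
Definition b_low_up (n : nat) : nat :=
  num_downsets (fun x : {set 'I_n} => (2 <= #|x|) && (#|x| <= n - 2)).

(* Main.v *)
Require Import Defs.
From mathcomp Require Import all_boot all_order zify.
Set Implicit Arguments. Unset Strict Implicit. Unset Printing Implicit Defensive.

Lemma card_bij (T U : finType) (A : {set T}) (B : {set U}) (f : T -> U) (g : U -> T) :
  {in A, forall x, f x \in B} -> {in B, forall y, g y \in A} ->
  {in A, cancel f g} -> {in B, cancel g f} -> #|A| = #|B|.
Proof.
move=> fAB gBA fK gK; apply/eqP; rewrite eqn_leq; apply/andP; split.
  rewrite -(card_in_imset (can_in_inj fK)); apply: subset_leq_card.
  by apply/subsetP=> y /imsetP [x xA ->]; apply: fAB.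
rewrite -(card_in_imset (can_in_inj gK)); apply: subset_leq_card.
by apply/subsetP=> y /imsetP [x xA ->]; apply: gBA.
Qed.

Lemma num_downsets_ext n (P Q : pred {set 'I_n}) : P =1 Q -> num_downsets P = num_downsets Q.
Proof.
move=> PQ; apply: eq_card => D; rewrite !inE /is_downset.
congr andb; apply: eq_forallb => x; first by rewrite PQ.
by apply: eq_forallb => y; rewrite PQ.
Qed.

Lemma num_downsets_empty n (P : pred {set 'I_n}) : (forall x, ~~ P x) -> num_downsets P = 1.
Proof.
move=> nP; rewrite /num_downsets -(cards1 (set0 : {set {set 'I_n}})); apply: eq_card => D.
rewrite !inE /is_downset; apply/idP/idP.
  case/andP=> /forallP H _; apply/eqP/setP=> x; rewrite inE.
  by apply/negbTE/negP=> xD; move: (H x); rewrite xD (negbTE (nP x)).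
move/eqP->; apply/andP; split; apply/forallP=> x; rewrite ?inE //.
by apply/forallP=> y; rewrite inE.
Qed.

Lemma num_downsets_one n (P : pred {set 'I_n}) a : (forall x, P x = (x == a)) -> num_downsets P = 2.
Proof.
move=> Pa; rewrite /num_downsets.
have ->: [set D | is_downset P D] = [set set0; [set a]].
  apply/setP=> D; rewrite !inE /is_downset; apply/idP/idP.
    case/andP=> /forallP H _.
    have sub : D \subset [set a] by apply/subsetP=> x xD; move: (H x); rewrite xD Pa inE.
    by move: sub; rewrite subset1; case/orP=> /eqP->; rewrite eqxx ?orbT.
  case/orP=> /eqP->; apply/andP; split; apply/forallP=> x; rewrite ?inE //.
  - by apply/forallP=> y; rewrite inE.
  - by apply/implyP=> /eqP->; rewrite Pa.
  - apply/forallP=> y; apply/implyP; rewrite !inE Pa => /and3P [] /eqP -> /eqP ->.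
    by rewrite eqxx.
rewrite cards2; case: eqP => // /setP /(_ a); rewrite !inE eqxx //.
Qed.

Lemma downsetP n (P : pred {set 'I_n}) (D : {set {set 'I_n}}) : reflect
  ((forall x, x \in D -> P x) /\ (forall x y, x \in D -> P y -> y \subset x -> y \in D))
  (is_downset P D).
Proof.
apply: (iffP andP) => [[/forallP H1 /forallP H2]|[H1 H2]]; split.
- by move=> x xD; move: (H1 x); rewrite xD.
- by move=> x y xD Py yx; move/forallP: (H2 x) => /(_ y); rewrite xD Py yx.
- by apply/forallP=> x; apply/implyP; apply: H1.
- by apply/forallP=> x; apply/forallP=> y; apply/implyP=> /and3P [] *; apply: (H2 x).
Qed.

Lemma split_low n (Q : pred {set 'I_n}) :
  #|[set D | is_downset Q D && [forall x : {set 'I_n}, ((#|x| <= 1) && Q x) ==> (x \in D)]]|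
  = num_downsets (fun x => (2 <= #|x|) && Q x).
Proof.
pose L := [set x : {set 'I_n} | (#|x| <= 1) && Q x].
apply: (@card_bij _ _ _ _ (fun D : {set {set 'I_n}} => [set x in D | 2 <= #|x|]) (fun E : {set {set 'I_n}} => E :|: L)).
- move=> D; rewrite !inE => /andP [/downsetP [H1 H2] _]; apply/downsetP; split.
    by move=> x; rewrite inE => /andP [xD ->]; rewrite H1.
  move=> x y; rewrite !inE => /andP [xD _] /andP [y2 Qy] yx.
  by rewrite y2 andbT (H2 x).
- move=> E; rewrite !inE => /downsetP [H1 H2]; apply/andP; split.
    apply/downsetP; split.
      by move=> x; rewrite !inE => /orP [/H1 /andP [] | /andP []].
    move=> x y; rewrite !inE => xEL Qy yx.
    case: (leqP 2 #|y|) => y2.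
      case/orP: xEL => [xE|/andP [x1 _]]; first by rewrite (H2 x) // y2.
      by move: (leq_trans (subset_leq_card yx) x1); rewrite leqNgt y2.
    by rewrite Qy -ltnS y2 orbT.
  by apply/forallP=> x; apply/implyP=> xL; rewrite !inE xL orbT.
- move=> D; rewrite !inE => /andP [/downsetP [H1 H2] /forallP H3].
  apply/setP=> x; rewrite !inE; case: (leqP 2 #|x|) => x2.
    have ->: (#|x| <= 1) = false by rewrite leqNgt x2.
    by rewrite andbT orbF.
  have e1: (#|x| <= 1) = true by rewrite -ltnS x2.
  have e2: (2 <= #|x|) = false by rewrite leqNgt x2.
  rewrite andbF /= e1 /=; apply/idP/idP; first by move=> Qx; move: (H3 x); rewrite e1 Qx.
  exact: H1.
- move=> E; rewrite !inE => /downsetP [H1 H2].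
  apply/setP=> x; rewrite !inE; case: (leqP 2 #|x|) => x2.
    have ->: (#|x| <= 1) = false by rewrite leqNgt x2.
    by rewrite andbT orbF.
  rewrite andbF; apply/esym/negbTE/negP=> xE.
  by move: (H1 x xE); rewrite leqNgt x2.
Qed.

Section Transport.
Variables (n : nat) (A : {set 'I_n}).
Let k := #|A|.
Let h : 'I_k -> 'I_n := fun i => @enum_val _ (mem A) i.

Let hinj : injective h.
Proof. exact: enum_val_inj. Qed.
Let hA i : h i \in A.
Proof. exact: enum_valP. Qed.
Let hsurj z : z \in A -> exists i, h i = z.
Proof. by move=> zA; exists (enum_rank_in zA z); rewrite /h enum_rankK_in. Qed.

Let im_pre (y : {set 'I_n}) : y \subset A -> h @: (h @^-1: y) = y.
Proof.
move=> yA; apply/setP=> z; apply/imsetP/idP => [[i]|zy].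
  by rewrite inE => iy ->.
have [i hiz] := hsurj (subsetP yA z zy).
by exists i; rewrite // inE hiz.
Qed.

Let pre_im (x : {set 'I_k}) : h @^-1: (h @: x) = x.
Proof. by apply/setP=> i; rewrite inE mem_imset. Qed.

Let card_pre (y : {set 'I_n}) : y \subset A -> #|h @^-1: y| = #|y|.
Proof. by move=> yA; rewrite -{2}(im_pre yA) card_imset. Qed.

Let im_sub (x : {set 'I_k}) : h @: x \subset A.
Proof. by apply/subsetP=> z /imsetP [i _ ->]. Qed.

Lemma transport :
  num_downsets (fun x : {set 'I_n} => (2 <= #|x|) && (x \subset A)) = b_low k.
Proof.
rewrite /b_low /num_downsets.
apply: (@card_bij _ _ _ _ (fun E : {set {set 'I_n}} => [set h @^-1: y | y : {set 'I_n} in E])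
                          (fun E : {set {set 'I_k}} => [set h @: x | x : {set 'I_k} in E])).
- move=> E; rewrite !inE => /downsetP [H1 H2]; apply/downsetP; split.
    move=> x /imsetP [y yE ->]; case/andP: (H1 y yE) => y2 yA.
    by rewrite card_pre.
  move=> x y /imsetP [z zE ->] y2 yx; apply/imsetP; exists (h @: y); last by rewrite pre_im.
  apply: (H2 z) => //.
    by rewrite card_imset // y2 im_sub.
  case/andP: (H1 z zE) => _ zA.
  by rewrite -(im_pre zA); apply: imsetS.
- move=> E; rewrite !inE => /downsetP [H1 H2]; apply/downsetP; split.
    by move=> x /imsetP [y yE ->]; rewrite card_imset // H1 // im_sub.
  move=> x y /imsetP [z zE ->] /andP [y2 yA] yx; apply/imsetP; exists (h @^-1: y); last by rewrite im_pre.
  apply: (H2 z) => //; first by rewrite card_pre.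
  by rewrite -(pre_im z); apply: preimsetS.
- move=> E; rewrite !inE => /downsetP [H1 _].
  rewrite -imset_comp -[RHS]imset_id; apply: eq_in_imset => y yE /=.
  by case/andP: (H1 y yE) => _ yA; rewrite im_pre.
- move=> E _; rewrite -imset_comp -[RHS]imset_id; apply: eq_in_imset => x _ /=.
  by rewrite pre_im.
Qed.
End Transport.

Lemma card_le1 (T : finType) (x : {set T}) : #|x| <= 1 -> x = set0 \/ exists z, x = [set z].
Proof.
rewrite leq_eqVlt ltnS leqn0 orbC => /orP [|/cards1P]; last by right.
by rewrite cards_eq0 => /eqP; left.
Qed.

Definition supp n (D : {set {set 'I_n}}) := [set i | [set i] \in D].

Lemma supp_equiv n (A : {set 'I_n}) (D : {set {set 'I_n}}) :
  [&& is_downset (fun _ => true) D, D != set0 & supp D == A] =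
  is_downset (fun x => x \subset A) D &&
    [forall x : {set 'I_n}, ((#|x| <= 1) && (x \subset A)) ==> (x \in D)].
Proof.
apply/idP/idP.
  case/and3P => /downsetP [_ H2] D0 /eqP sD.
  have sub x : x \in D -> x \subset A.
    move=> xD; apply/subsetP=> z zx; rewrite -sD inE; apply: (H2 x) => //.
    by rewrite sub1set.
  apply/andP; split.
    apply/downsetP; split => // x y xD _ yx; exact: (H2 x).
  apply/forallP=> x; apply/implyP=> /andP [/card_le1 [->|[z ->]] xA].
    case/set0Pn: D0 => d dD; apply: (H2 d) => //; exact: sub0set.
  by move: xA; rewrite -sD sub1set inE.
case/andP => /downsetP [H1 H2] /forallP H3.
have low (x : {set 'I_n}) : #|x| <= 1 -> x \subset A -> x \in D.
  by move=> x1 xA; move: (H3 x); rewrite x1 xA.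
apply/and3P; split.
- apply/downsetP; split => // x y xD _ yx; apply: (H2 x) => //.
  exact: subset_trans yx (H1 x xD).
- by apply/set0Pn; exists set0; apply: low; rewrite ?cards0 ?sub0set.
- apply/eqP/setP=> i; rewrite inE; apply/idP/idP.
    by move/H1; rewrite sub1set.
  by move=> iA; apply: low; rewrite ?cards1 ?sub1set.
Qed.

Lemma sum_by_card n (F : nat -> nat) :
  \sum_(A : {set 'I_n}) F #|A| = \sum_(k < n.+1) 'C(n, k) * F k.
Proof.
rewrite (partition_big (fun A : {set 'I_n} => (inord #|A| : 'I_n.+1)) predT) //=.
apply: eq_bigr => k _.
have E (A : {set 'I_n}) : (inord #|A| == k :> 'I_n.+1) = (#|A| == k).
  rewrite -val_eqE /= inordK // ltnS.
  by rewrite -[X in _ <= X]card_ord max_card.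
rewrite (eq_bigl (fun A => A \in [set A : {set 'I_n} | #|A| == k])); last first.
  by move=> A; rewrite inE E.
rewrite (eq_bigr (fun _ => F k)); last by move=> A; rewrite inE => /eqP->.
by rewrite sum_nat_const card_draws card_ord.
Qed.

Lemma b_low_small n : n <= 1 -> b_low n = 1.
Proof.
move=> n1; apply: num_downsets_empty => x; rewrite -ltnNge ltnS.
by apply: leq_trans n1; rewrite -[X in _ <= X]card_ord max_card.
Qed.

Lemma b_sum n : b n = 1 + \sum_(A : {set 'I_n}) b_low #|A|.
Proof.
pose X := [set D : {set {set 'I_n}} | is_downset (fun _ => true) D].
rewrite /b /num_downsets -/X -(cardsID [set set0] X).
have ->: X :&: [set set0] = [set set0].
  apply/setP=> D; rewrite !inE; case: (D =P set0) => [->|]; rewrite ?andbF // andbT.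
  by apply/downsetP; split => x; rewrite inE.
rewrite cards1; congr (_ + _).
rewrite -sum1_card (partition_big (@supp n) predT) //=.
apply: eq_bigr => A _.
rewrite -transport -split_low -sum1_card; apply: eq_bigl => D.
rewrite /X !inE -supp_equiv.
by case: (is_downset _ D); case: (D != set0).
Qed.

Lemma first_formula n : 3 <= n ->
  b n = 2 + n + \sum_(2 <= k < n.+1) 'C(n, k) * b_low k.
Proof.
move=> n3; rewrite b_sum sum_by_card -(big_mkord xpredT (fun k => 'C(n, k) * b_low k)).
rewrite big_ltn // big_ltn; last by lia.
rewrite bin0 bin1 !b_low_small // !muln1; lia.
Qed.

Lemma b_low_2 : b_low 2 = 2.
Proof.
apply: (@num_downsets_one _ _ setT) => x.
apply/idP/idP; last by move/eqP->; rewrite cardsT card_ord.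
by move=> x2; rewrite eqEcard subsetT cardsT card_ord.
Qed.

Section Second.
Variable k : nat.
Hypothesis k3 : 3 <= k.

Let cC (x : {set 'I_k}) : #|~: x| = k - #|x|.
Proof. have := cardsC x; rewrite card_ord; lia. Qed.
Let cx (x : {set 'I_k}) : #|x| <= k.
Proof. by rewrite -[X in _ <= X]card_ord max_card. Qed.

Definition Xs := [set D : {set {set 'I_k}} | is_downset (fun _ => true) D].
Definition S1 := [set D in Xs | [forall x : {set 'I_k}, (#|x| <= 1) ==> (x \in D)]].
Definition S2 := [set D in Xs | [forall x : {set 'I_k}, (x \in D) ==> (#|x| <= k - 2)]].

Lemma cardS1 : #|S1| = b_low k.
Proof.
rewrite /b_low -(num_downsets_ext (P := fun x => (2 <= #|x|) && true)); last by move=> x; rewrite andbT.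
rewrite -split_low; apply: eq_card => D; rewrite !inE.
congr andb; apply: eq_forallb => x; by rewrite andbT.
Qed.

Lemma cardS12 : #|S1 :&: S2| = b_low_up k.
Proof.
rewrite /b_low_up -(split_low (fun x : {set 'I_k} => #|x| <= k - 2)).
apply: eq_card => D; rewrite !inE; apply/idP/idP.
  case/andP=> /andP [/downsetP [_ H2] /forallP H3] /andP [_ /forallP H4].
  apply/andP; split.
    apply/downsetP; split => [x xD|x y xD _ yx]; last exact: (H2 x).
    by move: (H4 x); rewrite xD.
  apply/forallP=> x; apply/implyP=> /andP [x1 _]; move: (H3 x); by rewrite x1.
case/andP=> /downsetP [H1 H2] /forallP H3.
have dsT : is_downset (fun _ => true) D.
  apply/downsetP; split => // x y xD _ yx; apply: (H2 x) => //.
  exact: leq_trans (subset_leq_card yx) (H1 x xD).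
rewrite !dsT /=; apply/andP; split; apply/forallP=> x; apply/implyP.
  by move=> x1; move: (H3 x); rewrite x1 /= (leq_trans x1) //; lia.
exact: H1.
Qed.

Lemma cardS2 : #|S2| = b_low k.
Proof.
rewrite /b_low /num_downsets.
apply: (@card_bij _ _ _ _
  (fun D : {set {set 'I_k}} => [set x : {set 'I_k} | (2 <= #|x|) && (~: x \notin D)])
  (fun E : {set {set 'I_k}} => [set x : {set 'I_k} | (#|x| <= k - 2) && (~: x \notin E)])).
- move=> D; rewrite !inE => /andP [/downsetP [_ H2] _]; apply/downsetP; split.
    by move=> x; rewrite inE => /andP [].
  move=> x y; rewrite !inE => /andP [x2 nx] y2 yx; rewrite y2 /=.
  apply/negP=> yD; move/negP: nx; apply; apply: (H2 (~: y)) => //.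
  by rewrite setCS.
- move=> E; rewrite !inE => /downsetP [_ H2]; apply/andP; split.
    apply/downsetP; split => // x y; rewrite !inE => /andP [xk nx] _ yx.
    rewrite (leq_trans (subset_leq_card yx) xk) /=.
    apply/negP=> yE; move/negP: nx; apply; apply: (H2 (~: y)) => //.
      by rewrite cC; move: (cx x) xk; set m := #|x|; clearbody m; lia.
    by rewrite setCS.
  by apply/forallP=> x; apply/implyP; rewrite inE => /andP [].
- move=> D; rewrite !inE => /andP [_ /forallP H3]; apply/setP=> x; rewrite !inE setCK.
  case xD: (x \in D) => /=.
    by move: (H3 x); rewrite xD /= => ->; rewrite andbF.
  case: (leqP #|x| (k - 2)) => //= xk; rewrite andbT cC; apply/negbF; move: (cx x) xk; set m := #|x|; clearbody m; lia.
- move=> E; rewrite !inE => /downsetP [H1 _]; apply/setP=> x; rewrite !inE setCK.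
  case xE: (x \in E) => /=.
    by move: (H1 x xE) => ->; rewrite andbF.
  case: (leqP 2 #|x|) => //= x2; rewrite andbT cC; apply/negbF; move: (cx x) x2; set m := #|x|; clearbody m; lia.
Qed.

Definition Dj (j : 'I_k) := [set y : {set 'I_k} | j \notin y].

Lemma S3_eq : Xs :\: (S1 :|: S2) = [set Dj j | j : 'I_k].
Proof.
apply/setP=> D; rewrite !inE; apply/idP/idP.
  case/andP=> /norP [nS1 nS2] DX.
  rewrite DX /= in nS1 nS2; move/downsetP: DX => [_ H2].
  case/forallPn: nS1 => x; rewrite negb_imply => /andP [x1 xD].
  case/forallPn: nS2 => x0; rewrite negb_imply -ltnNge => /andP [x0D x0k].
  case: (card_le1 x1) => [x0e|[j xj]].
    by move: xD; rewrite x0e (H2 x0) // sub0set.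
  have jx0 : j \notin x0.
    by apply/negP=> jx; move: xD; rewrite xj (H2 x0) // sub1set.
  have ex0 : x0 = ~: [set j].
    apply/eqP; rewrite eqEcard; apply/andP; split.
      by apply/subsetP=> z zx; rewrite !inE; apply/negP=> /eqP ez; move: jx0; rewrite -ez zx.
    rewrite cardsC1 card_ord; move: x0k; set m := #|x0|; clearbody m; lia.
  apply/imsetP; exists j => //; apply/setP=> y; rewrite inE.
  apply/idP/idP.
    by move=> yD; apply/negP=> jy; move: xD; rewrite xj (H2 y) // sub1set.
  move=> jy; apply: (H2 x0) => //; rewrite ex0; apply/subsetP=> z zy; rewrite !inE.
  by apply/negP=> /eqP ez; move: jy; rewrite -ez zy.
case/imsetP=> j _ ->.
have dsT : is_downset (fun _ => true) (Dj j).
  apply/downsetP; split => // x y; rewrite !inE => jx _ yx.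
  by apply/negP=> jy; move/negP: jx; apply; apply: (subsetP yx).
rewrite dsT !andbT; apply/norP; split.
  apply/forallPn; exists [set j]; rewrite cards1 /= !inE eqxx //.
apply/forallPn; exists (~: [set j]); rewrite !inE eqxx /= cC cards1 -ltnNge; lia.
Qed.

Lemma cardS3 : #|Xs :\: (S1 :|: S2)| = k.
Proof.
rewrite S3_eq card_imset ?card_ord // => i j /setP /(_ [set j]); rewrite !inE eqxx /=.
by case: eqP.
Qed.

Lemma second_identity : b k + b_low_up k = 2 * b_low k + k.
Proof.
have e : b k = #|Xs| by [].
have h1 : Xs :&: (S1 :|: S2) = S1 :|: S2.
  by apply/setIidPr; apply/subsetP=> D; rewrite !inE => /orP [] /andP [].
move: (cardsID (S1 :|: S2) Xs); rewrite h1 cardS3 => h2.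
move: (cardsUI S1 S2); rewrite cardS1 cardS2 cardS12 => h3.
rewrite e -h2; lia.
Qed.
End Second.

Theorem theorem2 :
  (forall n : nat, 3 <= n ->
     b n = 2 + n + \sum_(2 <= k < n.+1) 'C(n, k) * b_low k) /\
  b_low 2 = 2 /\
  (forall k : nat, 3 <= k ->
     b_low k = b_low_up k + 2 + \sum_(2 <= i < k) 'C(k, i) * b_low i).
Proof.
split; first exact: first_formula.
split; first exact: b_low_2.
move=> k k3; move: (second_identity k3) (first_formula k3).
rewrite big_nat_recr /=; last by lia.
rewrite binn mul1n.
lia.
Qed.
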